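(* There is no finitely generated partially commutative group $G$ with $\mathrm{cdim}(G)=3$.
   Context: A finitely generated partially commutative group is a group $G(\Gamma)=\langle X\mid [a,b]=1 \text{ whenever } a,b \text{ are joined by an edge of }\Gamma\rangle$ for a finite simple undirected graph $\Gamma$ with vertex set $X$, where $[a,b]=a^{-1}b^{-1}ab$. The centraliser dimension $\mathrm{cdim}(H)$ of a group $H$ is the maximal length $k$ of a chain $C_0>C_1>\cdots>C_k$ (strict inclusions) of centralisers of subsets of $H$. *)

(* Defs.v *)
From mathcomp Require Import all_boot.
Set Implicit Arguments. Unset Strict Implicit. Unset Printing Implicit Defensive.

(* Partially commutative group G(Gamma) for a graph Gamma = (T, e):
   elements are equivalence classes of words over the letters x^{+1}, x^{-1}
   (x : T; the boolean flag true means inverse); the product is concatenation. *)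
Definition letter (T : finType) := (T * bool)%type.
Definition word (T : finType) := seq (letter T).

Inductive raag_eq (T : finType) (e : rel T) : word T -> word T -> Prop :=
| raag_refl w : raag_eq e w w
| raag_sym w1 w2 : raag_eq e w1 w2 -> raag_eq e w2 w1
| raag_trans w1 w2 w3 : raag_eq e w1 w2 -> raag_eq e w2 w3 -> raag_eq e w1 w3
| raag_cancel (u v : word T) (a : T) (b : bool) :
    raag_eq e (u ++ [:: (a, b); (a, ~~ b)] ++ v) (u ++ v)
| raag_comm (u v : word T) (a c : T) (b1 b2 : bool) :
    e a c ->
    raag_eq e (u ++ [:: (a, b1); (c, b2)] ++ v) (u ++ [:: (c, b2); (a, b1)] ++ v).

Definition centraliser (T : finType) (e : rel T) (S : word T -> Prop) :
  word T -> Prop :=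
  fun w => forall s, S s -> raag_eq e (w ++ s) (s ++ w).

Definition has_cent_chain (T : finType) (e : rel T) (k : nat) : Prop :=
  exists S : nat -> (word T -> Prop),
    forall i, i < k ->
      (forall w, centraliser e (S i.+1) w -> centraliser e (S i) w) /\
      (exists w, centraliser e (S i) w /\ ~ centraliser e (S i.+1) w).

Definition cdim_eq (T : finType) (e : rel T) (d : nat) : Prop :=
  has_cent_chain e d /\ (forall k, has_cent_chain e k -> k <= d).

(* Main.v *)
Require Import Defs.
From mathcomp Require Import all_boot all_order all_algebra.
From mathcomp Require Import ring zify.
From Stdlib Require Import Classical.
Set Implicit Arguments. Unset Strict Implicit. Unset Printing Implicit Defensive.
Import Order.TTheory GRing.Theory Num.Theory.

Section Words.
Variables (T : finType) (e : rel T).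
Local Notation req := (raag_eq e).
Local Notation word := (word T).

Lemma req_ctx (p q w1 w2 : word) : req w1 w2 -> req (p ++ w1 ++ q) (p ++ w2 ++ q).
Proof.
elim=> {w1 w2} [w|w1 w2 _ IH|w1 w2 w3 _ IH1 _ IH2|u v a b|u v a c b1 b2 Hac].
- exact: raag_refl.
- exact: raag_sym.
- exact: raag_trans IH1 IH2.
- have := raag_cancel e (p ++ u) (v ++ q) a b; by rewrite -!catA /=.
- have := raag_comm (p ++ u) (v ++ q) b1 b2 Hac; by rewrite -!catA /=.
Qed.

Lemma req_cons l w1 w2 : req w1 w2 -> req (l :: w1) (l :: w2).
Proof. by move=> H; have := req_ctx [:: l] [::] H; rewrite !cats0. Qed.

Lemma req_catl p w1 w2 : req w1 w2 -> req (p ++ w1) (p ++ w2).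
Proof. by move=> H; have := req_ctx p [::] H; rewrite !cats0. Qed.

Lemma req_catr q w1 w2 : req w1 w2 -> req (w1 ++ q) (w2 ++ q).
Proof. by move=> H; have := req_ctx [::] q H. Qed.

Definition lcomm (l1 l2 : letter T) := (l1.1 == l2.1) || e l1.1 l2.1.

Lemma req_cancel2 p q a b : req (p ++ (a, b) :: (a, ~~ b) :: q) (p ++ q).
Proof. exact: (raag_cancel e p q a b). Qed.

Lemma req_swap p q l1 l2 : lcomm l1 l2 -> req (p ++ l1 :: l2 :: q) (p ++ l2 :: l1 :: q).
Proof.
case: l1 l2 => [a1 b1] [a2 b2]; rewrite /lcomm /=; case/orP=> [/eqP<-|H].
- case: (eqVneq b1 b2) => [<-|ne]; first exact: raag_refl.
  have -> : b2 = ~~ b1 by case: b1 b2 ne => [] [].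
  apply: raag_trans (req_cancel2 _ _ _ _) _.
  apply: raag_sym; have := req_cancel2 p q a1 (~~ b1); by rewrite negbK.
- exact: (raag_comm p q b1 b2 H).
Qed.

Lemma req_move p u l q : all (fun x => lcomm x l) u ->
  req (p ++ u ++ l :: q) (p ++ l :: u ++ q).
Proof.
elim: u p => [|x u IH] p /=; first by move=> _; exact: raag_refl.
case/andP=> Hx Hu.
have := IH (rcons p x) Hu; rewrite -cats1 -!catA /= => H.
apply: raag_trans H _.
exact: req_swap.
Qed.

Definition flip (l : letter T) : letter T := (l.1, ~~ l.2).
Definition inv (w : word) : word := rev (map flip w).

Lemma inv_cons l w : inv (l :: w) = inv w ++ [:: flip l].
Proof. by rewrite /inv /= rev_cons cats1. Qed.

Lemma inv_r w : req (w ++ inv w) [::].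
Proof.
elim: w => [|l w IH] /=; first exact: raag_refl.
rewrite inv_cons catA.
have := req_ctx [:: l] [:: flip l] IH; rewrite /= => H.
apply: raag_trans H _.
case: l => a b; have := req_cancel2 [::] [::] a b; by [].
Qed.

Lemma inv_l w : req (inv w ++ w) [::].
Proof.
elim: w => [|l w IH] /=; first exact: raag_refl.
rewrite inv_cons -catA /=.
apply: raag_trans _ IH.
case: l => a b; have := req_cancel2 (inv w) w a (~~ b); by rewrite negbK.
Qed.

Lemma comm_of_commutator a b :
  req (a ++ b ++ inv a ++ inv b) [::] -> req (a ++ b) (b ++ a).
Proof.
move=> H.
have H1 : req ((a ++ b ++ inv a ++ inv b) ++ b ++ a) (b ++ a).
  by have := req_catr (b ++ a) H.
apply: raag_trans H1.
apply: raag_sym.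
have E : (a ++ b ++ inv a ++ inv b) ++ b ++ a = (a ++ b ++ inv a) ++ (inv b ++ b) ++ a.
  by rewrite -!catA.
rewrite E.
have := req_ctx (a ++ b ++ inv a) a (inv_l b); rewrite /= => H2.
apply: raag_trans H2 _.
rewrite -!catA.
have := req_ctx (a ++ b) [::] (inv_l a); rewrite !cats0 -!catA.
by [].
Qed.

End Words.
Section Mat.
Local Open Scope ring_scope.
Variable R : comPzRingType.
Definition mat := (R * R * R * R)%type.
Definition mmul (x y : mat) : mat :=
  let: (a, b, c, d) := x in let: (a', b', c', d') := y in
  (a * a' + b * c', a * b' + b * d', c * a' + d * c', c * b' + d * d').
Definition mI : mat := (1, 0, 0, 1).
Arguments mmul : simpl never.
Lemma mmulA x y z : mmul x (mmul y z) = mmul (mmul x y) z.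
Proof.
case: x => [[[a b] c] d]; case: y => [[[a1 b1] c1] d1]; case: z => [[[a2 b2] c2] d2] /=.
congr (_, _, _, _); ring.
Qed.
Lemma mmul1 x : mmul mI x = x.
Proof. case: x => [[[a b] c] d] /=; congr (_, _, _, _); ring. Qed.
Lemma mmulr1 x : mmul x mI = x.
Proof. case: x => [[[a b] c] d] /=; congr (_, _, _, _); ring. Qed.

Variable T : finType.
Variable e : rel T.
Variable f : letter T -> mat.
Definition rho (w : word T) : mat := foldr (fun l M => mmul (f l) M) mI w.
Lemma rho_cat u v : rho (u ++ v) = mmul (rho u) (rho v).
Proof.
elim: u => [|l u IH]; first by rewrite /= mmul1.
rewrite /= IH; exact: mmulA.
Qed.

Hypothesis Hc : forall a b, mmul (f (a, b)) (f (a, ~~ b)) = mI.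
Hypothesis Hm : forall a c b1 b2, e a c ->
  mmul (f (a, b1)) (f (c, b2)) = mmul (f (c, b2)) (f (a, b1)).
Lemma rho_req w1 w2 : raag_eq e w1 w2 -> rho w1 = rho w2.
Proof.
elim=> {w1 w2} [//|//|w1 w2 w3 _ -> _ -> //|u v a b|u v a c b1 b2 Hac].
- by rewrite !rho_cat /=; congr (mmul _ _); rewrite mmulr1 Hc mmul1.
- by rewrite !rho_cat /=; congr (mmul _ _); rewrite !mmulr1 Hm.
Qed.
End Mat.

Lemma diff0 (V : zmodType) (x y : V) : x = y -> (x - y = 0)%R.
Proof. by move->; rewrite GRing.subrr. Qed.
Lemma eq_of_sub0 (V : zmodType) (x y : V) : (x - y = 0)%R -> x = y.
Proof. by move/eqP; rewrite GRing.subr_eq0 => /eqP. Qed.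

Section Par.
Local Open Scope ring_scope.
Lemma par3 (R : idomainType) (u1 u2 u3 v1 v2 v3 w1 w2 w3 : R) :
 [|| w1 != 0, w2 != 0 | w3 != 0] ->
 u1*w2 - u2*w1 = 0 -> u1*w3 - u3*w1 = 0 -> u2*w3 - u3*w2 = 0 ->
 v1*w2 - v2*w1 = 0 -> v1*w3 - v3*w1 = 0 -> v2*w3 - v3*w2 = 0 ->
 [/\ u1*v2 - u2*v1 = 0, u1*v3 - u3*v1 = 0 & u2*v3 - u3*v2 = 0].
Proof.
move=> Hw X1 X2 X3 Y1 Y2 Y3.
case/or3P: Hw => Hk.
- have M1 : u1*v2 - u2*v1 = 0.
    apply: (mulfI Hk); rewrite mulr0.
    by transitivity (- u1 * (v1*w2 - v2*w1) + v1 * (u1*w2 - u2*w1)); [ring | rewrite X1 Y1; ring].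
  split => //; apply: (mulfI Hk); rewrite mulr0.
  + by transitivity (- u1 * (v1*w3 - v3*w1) + v1 * (u1*w3 - u3*w1)); [ring | rewrite X2 Y2; ring].
  + by transitivity (- w3 * (u1*v2 - u2*v1) - u2 * (v1*w3 - v3*w1) + v2 * (u1*w3 - u3*w1)); [ring | rewrite M1 X2 Y2; ring].
- have M1 : u1*v2 - u2*v1 = 0.
    apply: (mulfI Hk); rewrite mulr0.
    by transitivity (v2 * (u1*w2 - u2*w1) - u2 * (v1*w2 - v2*w1)); [ring | rewrite X1 Y1; ring].
  split => //; apply: (mulfI Hk); rewrite mulr0.
  + by transitivity (w3 * (u1*v2 - u2*v1) - u1 * (v2*w3 - v3*w2) + v1 * (u2*w3 - u3*w2)); [ring | rewrite M1 X3 Y3; ring].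
  + by transitivity (- u2 * (v2*w3 - v3*w2) + v2 * (u2*w3 - u3*w2)); [ring | rewrite X3 Y3; ring].
- split; apply: (mulfI Hk); rewrite mulr0.
  + by transitivity (u1 * (v2*w3 - v3*w2) - u2 * (v1*w3 - v3*w1) + v3 * (u1*w2 - u2*w1)); [ring | rewrite X1 Y2 Y3; ring].
  + by transitivity (v3 * (u1*w3 - u3*w1) - u3 * (v1*w3 - v3*w1)); [ring | rewrite X2 Y2; ring].
  + by transitivity (v3 * (u2*w3 - u3*w2) - u3 * (v2*w3 - v3*w2)); [ring | rewrite X3 Y3; ring].
Qed.
End Par.

Lemma mat_ct (R : idomainType) (x y z m : mat R) : mmul y m <> mmul m y ->
  mmul x y = mmul y x -> mmul z y = mmul y z -> mmul x z = mmul z x.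
Proof.
case: x => [[[p q] r] s]; case: y => [[[a b] c] d]; case: z => [[[p' q'] r'] s'].
case: m => [[[m1 m2] m3] m4]; rewrite /mmul => Hnc [E1 E2 E3 E4] [F1 F2 F3 F4].
Local Open Scope ring_scope.
have X1 : q * c - r * b = 0 by transitivity ((p * a + q * c) - (a * p + b * r)); [ring | apply: diff0; first [exact: E1 | exact: esym E1]].
have X2 : q * (a - d) - (p - s) * b = 0 by transitivity ((a * q + b * s) - (p * b + q * d)); [ring | apply: diff0; first [exact: E2 | exact: esym E2]].
have X3 : r * (a - d) - (p - s) * c = 0 by transitivity ((r * a + s * c) - (c * p + d * r)); [ring | apply: diff0; first [exact: E3 | exact: esym E3]].
have Y1 : q' * c - r' * b = 0 by transitivity ((p' * a + q' * c) - (a * p' + b * r')); [ring | apply: diff0; first [exact: F1 | exact: esym F1]].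
have Y2 : q' * (a - d) - (p' - s') * b = 0 by transitivity ((a * q' + b * s') - (p' * b + q' * d)); [ring | apply: diff0; first [exact: F2 | exact: esym F2]].
have Y3 : r' * (a - d) - (p' - s') * c = 0 by transitivity ((r' * a + s' * c) - (c * p' + d * r')); [ring | apply: diff0; first [exact: F3 | exact: esym F3]].
have Hw : [|| b != 0, c != 0 | a - d != 0].
  case: eqP => [b0|] //=; case: eqP => [c0|] //=; case: eqP => [ad0|] //=.
  exfalso; apply: Hnc; have -> : a = d by apply/eqP; rewrite -subr_eq0 ad0.
  rewrite b0 c0; congr (_, _, _, _); ring.
have [M1 M2 M3] := par3 Hw X1 X2 X3 Y1 Y2 Y3.
congr (_, _, _, _); apply: eq_of_sub0.
- by transitivity (q * r' - r * q'); [ring | exact: M1].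
- by transitivity (- (q * (p' - s') - (p - s) * q')); [ring | rewrite M2 oppr0].
- by transitivity (r * (p' - s') - (p - s) * r'); [ring | exact: M3].
- by transitivity (- (q * r' - r * q')); [ring | rewrite M1 oppr0].
Qed.

Section Counts.
Local Open Scope ring_scope.
Variables (T : finType) (e : rel T).
Local Notation req := (raag_eq e).

Definition sgn (b : bool) : int := if b then -1 else 1.
Definition cz (v : T) (w : word T) : int :=
  \sum_(l <- w) (if l.1 == v then sgn l.2 else 0).

Lemma cz_cons v l w : cz v (l :: w) = (if l.1 == v then sgn l.2 else 0) + cz v w.
Proof. by rewrite /cz big_cons. Qed.
Lemma cz_cat v u w : cz v (u ++ w) = cz v u + cz v w.
Proof. by rewrite /cz big_cat. Qed.
Lemma cz_nil v : cz v [::] = 0.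
Proof. by rewrite /cz big_nil. Qed.

Lemma sgnN b : sgn (~~ b) = - sgn b.
Proof. by case: b. Qed.
Lemma sgn_sq b : sgn b * sgn b = 1.
Proof. by case: b. Qed.

Lemma cz_inv v w : cz v (inv w) = - cz v w.
Proof.
elim: w => [|l w IH]; first by rewrite /inv /= cz_nil oppr0.
rewrite inv_cons cz_cat IH cz_cons cz_cons cz_nil /flip /= sgnN.
by case: (l.1 == v); ring.
Qed.

Lemma cz_sign a b w : (a, ~~ b) \notin w -> 0 <= sgn b * cz a w.
Proof.
elim: w => [|l w IH]; first by rewrite cz_nil mulr0.
rewrite in_cons negb_or => /andP [Hl Hw].
rewrite cz_cons mulrDr; apply: addr_ge0; last exact: IH.
case: eqP => [El|_]; last by rewrite mulr0.
have -> : l.2 = b.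
  case: l Hl El => a' b' /= Hl Ea; subst a'.
  by move: Hl; destruct b, b'; rewrite ?eqxx.
by rewrite sgn_sq.
Qed.

Lemma AB (w : word T) :
  (forall l1 l2, l1 \in w -> l2 \in w -> lcomm e l1 l2) ->
  (forall v, cz v w = 0) -> req w [::].
Proof.
have [n] := ubnP (size w); elim: n w => // n IH [|l w] /= Hn Hpc Hcz.
  exact: raag_refl.
case: l Hpc Hcz => a b Hpc Hcz.
have Hin : (a, ~~ b) \in w.
  apply/negPn/negP => Hn'.
  have := cz_sign Hn'; have := Hcz a; rewrite cz_cons eqxx => H.
  have -> : cz a w = - sgn b by move: H => /= /eqP; rewrite addrC addr_eq0 => /eqP.
  by rewrite mulrN sgn_sq.
case/splitPr: Hin Hpc Hcz Hn => p q Hpc Hcz Hn.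
have H1 : req ((a, b) :: p ++ (a, ~~ b) :: q) ((a, b) :: (a, ~~ b) :: p ++ q).
  have := req_move (e:=e) (u:=p) (l:=(a, ~~ b)) [:: (a, b)] q; apply.
  apply/allP => x Hx; apply: Hpc; first by rewrite !inE mem_cat Hx orbT.
  by rewrite !inE mem_cat inE eqxx !orbT.
apply: raag_trans H1 _.
apply: raag_trans (req_cancel2 e [::] (p ++ q) a b) _.
apply: IH.
- by move: Hn; rewrite size_cat /= size_cat addnS ltnS => /ltnW.
- have sub : {subset p ++ q <= (a, b) :: p ++ (a, ~~ b) :: q}.
    by move=> x; rewrite !(inE, mem_cat) => /orP [] ->; rewrite ?orbT.
  by move=> l1 l2 H1' H2'; apply: Hpc; apply: sub.
- move=> v; have := Hcz v; rewrite cz_cons cz_cat cz_cons cz_cat /= sgnN.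
  rewrite cz_cat cz_nil; case: (a == v) => H; lia.
Qed.

End Counts.

Definition central (T : finType) (e : rel T) (v : T) := [forall u, (u != v) ==> e v u].

Lemma rho_cons (R : comPzRingType) (T : finType) (f : letter T -> mat R) l w :
  rho f (l :: w) = mmul (f l) (rho f w).
Proof. by []. Qed.

Lemma rank_eq (T : finType) (x y : T) : ((enum_rank x : nat) == enum_rank y) = (x == y).
Proof. by apply/eqP/eqP => [/ord_inj/enum_rank_inj|->]. Qed.

Section Special.
Local Open Scope ring_scope.
Variables (T : finType) (e : rel T).
Hypothesis Hsym : symmetric e.
Hypothesis Hirr : irreflexive e.
Local Notation central := (central e).
Hypothesis TR : forall u v w, ~~ central v -> e u v -> e v w -> u != w -> e u w.
Local Notation req := (raag_eq e).

Definition col (a : T) : T := odflt a [pick u | ~~ central u && ((u == a) || e u a)].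

Lemma col_spec a : ~~ central a -> ~~ central (col a) && ((col a == a) || e (col a) a).
Proof. move=> Ha; rewrite /col; case: pickP => [u Hu|H] //=. by rewrite Ha eqxx. Qed.

Lemma col_eq a c : ~~ central a -> ~~ central c -> (col a == col c) = ((a == c) || e a c).
Proof.
move=> Ha Hc; apply/idP/idP.
- move/eqP=> E.
  have /andP [Hu1 Hu2] := col_spec Ha.
  have := col_spec Hc; rewrite -E => /andP [_ Hu3].
  move: Hu1 Hu2 Hu3; set u := col a => Hu1 Hu2 Hu3.
  case/orP: Hu2 => [/eqP Eua | Hua]; case/orP: Hu3 => [/eqP Euc | Huc].
  + by rewrite -Eua -Euc eqxx.
  + by rewrite -Eua Huc orbT.
  + by rewrite -Euc Hsym Hua orbT.
  + case: (eqVneq a c) => [->|Hac] //=.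
    by apply: (TR Hu1) => //; rewrite Hsym.
- move=> H.
  have EP : [pick u | ~~ central u && ((u == a) || e u a)] =
            [pick u | ~~ central u && ((u == c) || e u c)].
    apply: eq_pick => u /=.
    case: (boolP (central u)) => Hu; rewrite ?Hu //=.
    case/orP: H => [/eqP <-|Hac] //.
    apply/idP/idP.
    + case/orP=> [/eqP ->|Hua]; first by rewrite Hac orbT.
      case: (eqVneq u c) => [->|Huc]; first by rewrite ?eqxx.
      by rewrite (TR Ha Hua Hac Huc) orbT.
    + case/orP=> [/eqP ->|Huc]; first by rewrite Hsym Hac orbT.
      case: (eqVneq u a) => [->|Hua]; first by rewrite ?eqxx.
      by rewrite (TR Hc Huc _ Hua) ?orbT // Hsym.
  rewrite /col EP; case: pickP => // H0.
  by have := H0 c; rewrite Hc eqxx.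
Qed.

Definition pti (a : T) : int := Posz (enum_rank (col a)).

Lemma pti_eq a c : ~~ central a -> ~~ central c -> (pti a == pti c) = ((a == c) || e a c).
Proof. by move=> Ha Hc; rewrite /pti eqz_nat rank_eq col_eq. Qed.

Definition Mp (p t : {poly int}) : mat {poly int} := (1 + p * t, - (p * p * t), t, 1 - p * t).

Lemma MpM p t s : mmul (Mp p t) (Mp p s) = Mp p (t + s).
Proof. rewrite /mmul /Mp; congr (_, _, _, _); ring. Qed.
Lemma Mp0 p : Mp p 0 = mI _.
Proof. rewrite /Mp /mI; congr (_, _, _, _); ring. Qed.

Definition tm (l : letter T) : {poly int} := (sgn l.2)%:P * 'X^((enum_rank l.1).+1).
Definition Lm (l : letter T) : mat {poly int} :=
  if central l.1 then mI _ else Mp (pti l.1)%:P (tm l).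

Lemma Lm_cancel a b : mmul (Lm (a, b)) (Lm (a, ~~ b)) = mI _.
Proof.
rewrite /Lm /=; case: ifP => _; first by rewrite mmul1.
by rewrite MpM /tm /= sgnN polyCN mulNr addrN Mp0.
Qed.

Lemma Lm_comm a c b1 b2 : e a c ->
  mmul (Lm (a, b1)) (Lm (c, b2)) = mmul (Lm (c, b2)) (Lm (a, b1)).
Proof.
move=> Hac; rewrite /Lm /=; case: ifP => Ha; first by rewrite mmul1 mmulr1.
case: ifP => Hc; first by rewrite mmul1 mmulr1.
have /eqP E : pti a == pti c by rewrite pti_eq ?Hac ?orbT ?negbT.
by rewrite E !MpM addrC.
Qed.

Lemma rhoL_req w1 w2 : req w1 w2 -> rho Lm w1 = rho Lm w2.
Proof. by apply: rho_req; [exact: Lm_cancel | exact: Lm_comm]. Qed.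

Definition tt (w : word T) : {poly int} := \sum_(l <- w) tm l.

Lemma tt_coef w v : (tt w)`_((enum_rank v).+1) = cz v w.
Proof.
rewrite /tt /cz coef_sum; apply: eq_bigr => l _.
rewrite /tm coefCM coefXn eqSS rank_eq eq_sym.
by case: (l.1 == v); rewrite ?mulr1 ?mulr0.
Qed.

Lemma tt_coef0 w : (tt w)`_0 = 0.
Proof. by rewrite /tt coef_sum big1 // => l _; rewrite /tm coefCM coefXn mulr0. Qed.

Lemma size_gt1 (p : {poly int}) : p != 0 -> p`_0 = 0 -> (1 < size p)%N.
Proof.
move=> H0 H1; rewrite ltnNge; apply/negP => /size1_polyC E.
by move: H0; rewrite E H1 eqxx.
Qed.

Definition blk (c : int) (b : word T) := all (fun l => ~~ central l.1 && (pti l.1 == c)) b.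

Lemma rho_blk c b : blk c b -> rho Lm b = Mp c%:P (tt b).
Proof.
elim: b => [|l b IH]; first by rewrite /tt big_nil Mp0.
move=> /andP [/andP [Hl /eqP Ec] Hb].
by rewrite rho_cons IH // /Lm (negbTE Hl) Ec MpM /tt big_cons.
Qed.

Lemma blk_req0 c b : blk c b -> tt b = 0 -> req b [::].
Proof.
move=> Hb Ht; apply: AB.
- move=> l1 l2 H1 H2.
  have /andP [Hc1 /eqP E1] := allP Hb l1 H1.
  have /andP [Hc2 /eqP E2] := allP Hb l2 H2.
  by rewrite /lcomm -pti_eq // E1 E2.
- by move=> v; rewrite -tt_coef Ht coef0.
Qed.

Definition NR (c : int) (v : {poly int} * {poly int}) :=
  let: (P, Q) := v in (P - c%:P * Q != 0) && (size Q <= size (P - c%:P * Q)%R)%N.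
Definition RR (c : int) (v : {poly int} * {poly int}) :=
  let: (P, Q) := v in (size (P - c%:P * Q)%R < size Q)%N.
Definition mv (x : mat {poly int}) (v : {poly int} * {poly int}) :=
  let: (a, b, c, d) := x in let: (P, Q) := v in (a * P + b * Q, c * P + d * Q).

Lemma mv_mul x y v : mv (mmul x y) v = mv x (mv y v).
Proof.
case: x => [[[a b] c] d]; case: y => [[[a' b'] c'] d']; case: v => P Q.
rewrite /mv /mmul; congr (_, _); ring.
Qed.
Lemma mv1 v : mv (mI _) v = v.
Proof. case: v => P Q; rewrite /mv /mI; congr (_, _); ring. Qed.

Lemma step c (t : {poly int}) v : (1 < size t)%N -> NR c v -> RR c (mv (Mp c%:P t) v).
Proof.
case: v => P Q Ht /andP [HD HQ]; rewrite /RR /mv /Mp.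
have E1 : ((1 + c%:P * t) * P + - (c%:P * c%:P * t) * Q) - c%:P * (t * P + (1 - c%:P * t) * Q)
   = P - c%:P * Q by ring.
have E2 : t * P + (1 - c%:P * t) * Q = Q + t * (P - c%:P * Q) by ring.
rewrite E1 E2.
move: HD HQ; set D := P - c%:P * Q => HD HQ.
have t0 : t != 0 by rewrite -size_poly_eq0; case: (size t) Ht.
have HtD := size_mul t0 HD.
have Hgt : (size Q < size (t * D)%R)%N. rewrite HtD -subn1. move: Ht HQ; move: (size Q) (size t) (size D) => a b d ? ?; lia.
rewrite (addrC Q (t * D)) (size_polyDl Hgt) HtD -subn1; move: Ht; move: (size t) (size D) => b d ?; lia.
Qed.

Lemma RR_NR c c' v : c != c' -> RR c v -> NR c' v.
Proof.
case: v => P Q; rewrite /RR /NR => Hcc HR.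
have E : P - c'%:P * Q = (P - c%:P * Q) + (c - c')%:P * Q by rewrite polyCB; ring.
have Hs : size ((c - c')%:P * Q) = size Q by rewrite size_Cmul // subr_eq0.
have HD : size (P - c'%:P * Q) = size Q by rewrite E addrC size_polyDl // Hs.
rewrite HD leqnn andbT -size_poly_eq0 HD -lt0n.
exact: leq_ltn_trans (leq0n _) HR.
Qed.

Inductive red : word T -> Prop :=
| red_nil : red [::]
| red_cons (c : int) (b w : word T) : b != [::] -> blk c b -> tt b != 0 -> red w ->
    (forall l w', w = l :: w' -> pti l.1 != c) -> red (b ++ w).

Lemma tt1 l : tt [:: l] != 0.
Proof.
apply/eqP => E; have := tt_coef [:: l] l.1.
by rewrite E coef0 cz_cons cz_nil eqxx addr0; case: l.2.
Qed.

Lemma red_ex w : all (fun l => ~~ central l.1) w -> exists h, req w h /\ red h.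
Proof.
elim: w => [|l w IH] /=; first by exists [::]; split; [exact: raag_refl | exact: red_nil].
case/andP=> Hl Hw; have [h0 [H0 Hr0]] := IH Hw.
have H1 : req (l :: w) (l :: h0) := req_cons l H0.
case: Hr0 H0 H1 => [|c b w1 Hb Hblk Ht Hr1 Hhd] H0 H1.
- exists [:: l]; split => //.
  apply: (@red_cons (pti l.1) [:: l] [::]) => //.
  + by rewrite /blk /= Hl eqxx.
  + exact: tt1.
  + exact: red_nil.
- case: (eqVneq (pti l.1) c) => [Ec|Hne].
  + case: (eqVneq (tt (l :: b)) 0) => [Ht0|Ht1].
    * exists w1; split; last exact: Hr1.
      apply: raag_trans H1 _.
      have : req (l :: b) [::] by apply: (blk_req0 (c := c)) Ht0; rewrite /blk /= Hl Ec eqxx.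
      by move/(req_catr w1).
    * exists ((l :: b) ++ w1); split => //.
      apply: (@red_cons c (l :: b) w1) => //.
      by rewrite /blk /= Hl Ec eqxx.
  + exists ([:: l] ++ (b ++ w1)); split => //.
    apply: (@red_cons (pti l.1) [:: l] (b ++ w1)) => //.
    * by rewrite /blk /= Hl eqxx.
    * exact: tt1.
    * exact: (@red_cons c b w1 Hb Hblk Ht Hr1 Hhd).
    * case: b Hb Hblk {Ht H0 H1} => [|l0 b'] //= _ /andP [/andP [_ /eqP E0] _] l' w' [<- _].
      by rewrite E0 eq_sym.
Qed.

Lemma pp h : red h -> forall l h', h = l :: h' ->
  exists cl, forall v, NR cl v -> RR (pti l.1) (mv (rho Lm h) v).
Proof.
elim=> [|c b w Hb Hblk Ht Hr IH Hhd] l h' E //.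
have Hl : pti l.1 = c.
  by case: b Hb Hblk E {Ht} => [|l0 b'] //= _ /andP [/andP [_ /eqP E0] _] [<- _].
rewrite rho_cat (rho_blk Hblk) Hl.
have Hs : (1 < size (tt b))%N := size_gt1 Ht (tt_coef0 b).
case: w Hr IH Hhd E => [|l2 w'] Hr IH Hhd E.
- by exists c => v Hv; rewrite (_ : rho Lm [::] = mI _) // mmulr1; exact: step.
- have [cl Hcl] := IH l2 w' erefl.
  exists cl => v Hv; rewrite mv_mul; apply: step Hs _.
  exact: RR_NR (Hhd l2 w' erefl) (Hcl v Hv).
Qed.

Definition hpart (w : word T) := filter (fun l => ~~ central l.1) w.
Definition zpart (w : word T) := filter (fun l => central l.1) w.

Lemma req_hz w : req w (hpart w ++ zpart w).
Proof.
elim: w => [|l w IH]; first exact: raag_refl.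
rewrite /hpart /zpart /=; case: (boolP (central l.1)) => Hl /=.
- apply: raag_trans (req_cons l IH) _.
  apply: raag_sym.
  have := req_move (e:=e) (u:=hpart w) (l:=l) [::] (zpart w); apply.
  apply/allP => x; rewrite mem_filter => /andP [Hx _].
  rewrite /lcomm; case: (eqVneq x.1 l.1) => [Ex|Hne] //=.
  by rewrite Hsym; move/forallP: Hl => /(_ x.1); rewrite Hne.
- exact: req_cons.
Qed.

Lemma rho_hpart w : rho Lm (hpart w) = rho Lm w.
Proof.
elim: w => [|l w IH] //; rewrite /hpart [X in rho _ X = _]/= -/(hpart w).
case: (boolP (central l.1)) => Hl.
- by rewrite rho_cons /Lm Hl mmul1.
- by rewrite !rho_cons IH.
Qed.

Lemma cz_zpart v w : cz v (zpart w) = if central v then cz v w else 0.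
Proof.
elim: w => [|l w IH]; first by rewrite /zpart /= cz_nil; case: ifP.
rewrite /zpart /=; case: (boolP (central l.1)) => Hl; rewrite ?cz_cons -/(zpart w) IH.
- case: (eqVneq l.1 v) => [<-|]; first by rewrite Hl.
  by case: ifP.
- case: (eqVneq l.1 v) => [Ev|]; last by case: ifP; rewrite ?add0r.
  by rewrite -Ev (negbTE Hl).
Qed.

Lemma kernel w : rho Lm w = mI _ -> (forall v, central v -> cz v w = 0) -> req w [::].
Proof.
move=> Hr Hz.
apply: raag_trans (req_hz w) _.
have Hh : req (hpart w) [::].
  have [h [Hh Hred]] := red_ex (filter_all _ w).
  apply: (raag_trans Hh).
  case: h Hh Hred => [|l h'] Hh Hred; first exact: raag_refl.
  exfalso; have [cl Hcl] := pp Hred erefl.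
  have Hrh : rho Lm (l :: h') = mI _ by rewrite -(rhoL_req Hh) rho_hpart.
  have := Hcl (1, 0); rewrite Hrh mv1 /RR /NR mulr0 subr0 oner_eq0 size_poly0.
  by move/(_ isT).
have Hzz : req (zpart w) [::].
  apply: AB.
  - move=> l1 l2; rewrite !mem_filter => /andP [H1 _] /andP [H2 _].
    rewrite /lcomm; case: (eqVneq l1.1 l2.1) => [//|Hne] /=.
    by move/forallP: H1 => /(_ l2.1); rewrite eq_sym Hne.
  - move=> v; rewrite cz_zpart; case: ifP => // Hv; exact: Hz.
apply: raag_trans (req_catr (zpart w) Hh) _.
exact: Hzz.
Qed.

Lemma comm_of_rho a b : mmul (rho Lm a) (rho Lm b) = mmul (rho Lm b) (rho Lm a) ->
  req (a ++ b) (b ++ a).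
Proof.
move=> H; apply: comm_of_commutator; apply: kernel.
- rewrite catA rho_cat [rho Lm (a ++ b)]rho_cat H -rho_cat.
  rewrite -rho_cat -catA (_ : rho Lm (b ++ a ++ inv a ++ inv b) = rho Lm (b ++ inv b)).
    exact: (rhoL_req (inv_r e b)).
  apply: rhoL_req; have := req_ctx b (inv b) (inv_r e a) => H'.
  by rewrite -catA /= in H'.
- by move=> v _; rewrite !cz_cat !cz_inv; ring.
Qed.

Lemma CT x y z : (exists w, ~ req (y ++ w) (w ++ y)) ->
  req (x ++ y) (y ++ x) -> req (z ++ y) (y ++ z) -> req (x ++ z) (z ++ x).
Proof.
move=> [w Hw] Hxy Hzy; apply: comm_of_rho.
have := rhoL_req Hxy; have := rhoL_req Hzy; rewrite !rho_cat => Ez Ex.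
apply: (mat_ct (m := rho Lm w)) Ex Ez.
move=> E; apply: Hw; exact: comm_of_rho.
Qed.

End Special.

Lemma not_cent (T : finType) (e : rel T) (S : word T -> Prop) (w : word T) :
  ~ centraliser e S w -> exists s, S s /\ ~ raag_eq e (w ++ s) (s ++ w).
Proof.
move=> H; apply: NNPP => Hno; apply: H => s Hs; apply: NNPP => Hc.
by apply: Hno; exists s.
Qed.

Lemma no3_of_CT (T : finType) (e : rel T) :
  (forall x y z, (exists w, ~ raag_eq e (y ++ w) (w ++ y)) ->
     raag_eq e (x ++ y) (y ++ x) -> raag_eq e (z ++ y) (y ++ z) ->
     raag_eq e (x ++ z) (z ++ x)) -> ~ has_cent_chain e 3.
Proof.
move=> CT [S HS].
have [_ [w0 [Hw0 Hnw0]]] := HS 0 isT.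
have [I1 [u [Hu Hnu]]] := HS 1 isT.
have [_ [x [Hx Hnx]]] := HS 2 isT.
have [s1 [Hs1 Hns1]] := not_cent Hnw0.
have [t [Ht Hnt]] := not_cent Hnu.
have [s3 [Hs3 Hns3]] := not_cent Hnx.
have Hxs1 : raag_eq e (x ++ s1) (s1 ++ x) := I1 x Hx s1 Hs1.
have Hus1 : raag_eq e (u ++ s1) (s1 ++ u) := Hu s1 Hs1.
have Hxu : raag_eq e (x ++ u) (u ++ x).
  apply: CT Hxs1 Hus1; exists w0 => H; apply: Hns1; exact: raag_sym.
have Hut : raag_eq e (u ++ t) (t ++ u).
  apply: (CT u x t).
  - by exists s3.
  - exact: raag_sym.
  - exact: raag_sym (Hx t Ht).
exact: Hnt.
Qed.

Section NonComm.
Local Open Scope ring_scope.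
Variables (T : finType) (e : rel T).
Hypothesis Hsym : symmetric e.
Hypothesis Hirr : irreflexive e.
Variables (x y : T).
Hypothesis Hxy : x != y.
Hypothesis Hnxy : ~~ e x y.

Definition fA (l : letter T) : mat int :=
  if l.1 == x then (if l.2 then (1, -1, 0, 1) else (1, 1, 0, 1))
  else if l.1 == y then (if l.2 then (1, 0, -1, 1) else (1, 0, 1, 1)) else mI _.

Lemma fA_cancel a b : mmul (fA (a, b)) (fA (a, ~~ b)) = mI _.
Proof.
rewrite /fA /=; case: (a == x); last case: (a == y); try by rewrite mmul1.
all: by case: b; rewrite /mmul /mI.
Qed.

Lemma fA_comm a c b1 b2 : e a c ->
  mmul (fA (a, b1)) (fA (c, b2)) = mmul (fA (c, b2)) (fA (a, b1)).
Proof.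
move=> Hac; rewrite /fA /=.
have Hca : e c a by rewrite Hsym.
case: (eqVneq a x) => [Ea|Hax].
  have Hcx : c != x by apply: contraTneq Hca => ->; rewrite -Ea Hirr.
  have Hcy : c != y by apply: contraTneq Hac => ->; rewrite Ea.
  by rewrite (negbTE Hcx) (negbTE Hcy) mmul1 mmulr1.
case: (eqVneq a y) => [Ea|Hay].
  have Hcx : c != x by apply: contraTneq Hac => ->; rewrite Ea Hsym.
  have Hcy : c != y by apply: contraTneq Hca => ->; rewrite -Ea Hirr.
  by rewrite (negbTE Hcx) (negbTE Hcy) mmul1 mmulr1.
by rewrite mmul1 mmulr1.
Qed.

Lemma noncomm : ~ raag_eq e ([:: (x, false)] ++ [:: (y, false)]) ([:: (y, false)] ++ [:: (x, false)]).
Proof.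
move=> H; have := rho_req fA_cancel fA_comm H.
rewrite /= /fA /= eqxx eq_sym (negbTE Hxy) eqxx !mmulr1 /mmul.
by case.
Qed.
End NonComm.

Theorem mainTheorem13 (T : finType) (e : rel T) :
  symmetric e -> irreflexive e -> ~ cdim_eq e 3.
Proof.
move=> Hsym Hirr [H3 Hmax].
case: (boolP [exists u, exists v, exists w,
   [&& ~~ central e v, e u v, e v w, u != w & ~~ e u w]]) => [Hex|Hno].
- move/existsP: Hex => [u /existsP [v /existsP [w /and5P [Hv Huv Hvw Huw Hnuw]]]].
  move/forallPn: Hv => [d]; rewrite negb_imply => /andP [Hdv Hnvd].
  suff : has_cent_chain e 4 by move/Hmax.
  pose sl (a : T) : word T := [:: (a, false)].
  have Com : forall a b, (a == b) || e a b -> raag_eq e (sl a ++ sl b) (sl b ++ sl a).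
    move=> a b H; exact: (req_swap (e:=e) [::] [::] (l1:=(a, false)) (l2:=(b, false)) H).
  have NC : forall a b, a != b -> ~~ e a b -> ~ raag_eq e (sl a ++ sl b) (sl b ++ sl a).
    move=> a b; exact: noncomm.
  pose L := [:: sl v; sl u; sl w; sl d].
  pose W := [:: sl d; sl w; sl u; sl v].
  exists (fun i s => exists2 j, (j < i)%N & s = nth [::] L j).
  move=> i Hi; split.
  + move=> z Hz s [j Hj ->]; apply: Hz; exists j => //; exact: ltnW.
  + exists (nth [::] W i); split.
    * move=> s [j Hj ->].
      case: i Hi Hj => [|[|[|[|i]]]] //= _; case: j => [|[|[|j]]] //= _; apply: Com.
      - by rewrite Hsym Hvw orbT.
      - by rewrite Huv orbT.
      - by rewrite eqxx.
      - by rewrite eqxx.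
      - by rewrite Hsym Huv orbT.
      - by rewrite Hvw orbT.
    * move=> Hc; have := Hc (nth [::] L i) (ex_intro2 _ _ i (ltnSn i) erefl).
      case: i Hi {Hc} => [|[|[|[|i]]]] //= _; apply: NC.
      - by [].
      - by rewrite Hsym.
      - by rewrite eq_sym.
      - by rewrite Hsym.
      - by [].
      - by [].
      - by rewrite eq_sym.
      - by [].
- apply: (no3_of_CT _ H3) => x y z.
  apply: (CT Hsym) => u v w Hv Huv Hvw Huw.
  apply/negPn/negP => Hn; move/negP: Hno; apply.
  apply/existsP; exists u; apply/existsP; exists v; apply/existsP; exists w.
  by rewrite Hv Huv Hvw Huw Hn.
Qed.
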